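(* Let $A\ge0$ and let $c:(0,1]\times S^1\to\mathbb R^2$ be smooth with each $c(t,\cdot)$ an immersion, and let $\alpha(t,\theta)$ be a continuous lift of $\arg c_\theta(t,\theta)$. Assume there are constants $C_1,C_2,C_3,C_4$ such that for all $t\in(0,1]$ and $\theta\in S^1$: (1) $\ell(c(t,\cdot))\le C_1$; (2) $|c_t(t,\theta)|\le C_2$; (3) $\int_{S^1}|\alpha_\theta(t,\theta)|\,d\theta\le C_3$; (4) $|\kappa_{c(t)}(\theta)|\le C_4/t$. Then $$\int_0^1\Big(\int_{S^1}(1+A\kappa_{c(t)}^2)\langle c_t,n_{c(t)}\rangle^2|c_\theta|\,d\theta\Big)^{1/2}dt\le C_2\big(\sqrt{C_1}+2\sqrt{AC_3C_4}\big).$$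
   Context: $S^1=\mathbb R/2\pi\mathbb Z$, $\mathbb R^2\cong\mathbb C$. $\ell(c)=\int_{S^1}|c_\theta|d\theta$, $n_c=ic_\theta/|c_\theta|$, $\kappa_c=\det(c_\theta,c_{\theta\theta})/|c_\theta|^3$. *)

(* Defs.v *)
From Stdlib Require Import Reals List.
From Coquelicot Require Import Coquelicot.
Open Scope R_scope.

Definition d_t (f : R -> R -> R) : R -> R -> R :=
  fun t th => Derive (fun s => f s th) t.
Definition d_th (f : R -> R -> R) : R -> R -> R :=
  fun t th => Derive (fun s => f t s) th.

Fixpoint iter_partial (w : list bool) (f : R -> R -> R) : R -> R -> R :=
  match w with
  | nil => f
  | b :: w' => if b then d_t (iter_partial w' f) else d_th (iter_partial w' f)
  end.

Definition smooth_on (U : R -> R -> Prop) (f : R -> R -> R) : Prop :=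
  forall (w : list bool) (t th : R), U t th ->
    ex_derive (fun s => iter_partial w f s th) t /\
    ex_derive (fun s => iter_partial w f t s) th /\
    continuous (fun p : R * R => iter_partial w f (fst p) (snd p)) (t, th).

Definition speed (x y : R -> R -> R) (t th : R) : R :=
  sqrt (d_th x t th ^ 2 + d_th y t th ^ 2).

Definition curve_length (x y : R -> R -> R) (t : R) : R :=
  RInt (fun th => speed x y t th) 0 (2 * PI).

Definition curvature (x y : R -> R -> R) (t th : R) : R :=
  (d_th x t th * d_th (d_th y) t th - d_th y t th * d_th (d_th x) t th)
    / speed x y t th ^ 3.

(* <c_t, n_c> with n_c = i c_theta / |c_theta| = (-y_theta, x_theta)/|c_theta| *)
Definition normal_velocity (x y : R -> R -> R) (t th : R) : R :=
  (- d_t x t th * d_th y t th + d_t y t th * d_th x t th) / speed x y t th.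

Definition inner_integral (A : R) (x y : R -> R -> R) (t : R) : R :=
  RInt (fun th => (1 + A * curvature x y t th ^ 2)
                  * normal_velocity x y t th ^ 2 * speed x y t th) 0 (2 * PI).

From mathcomp Require Import all_boot all_algebra.
From mathcomp Require Import all_classical all_reals all_analysis.
From mathcomp Require Import Rstruct Rstruct_topology.

Definition lebesgue_int_0_1 (g : R -> R) : \bar R :=
  (\int[@lebesgue_measure R]_(t in `]0%R, 1%R]%classic) (g t)%:E)%E.

Definition lebesgue_int_0_1_le (g : R -> R) (b : R) : Prop :=
  (lebesgue_int_0_1 g <= b%:E)%E.

(* Main.v *)
Require Import Defs.
From mathcomp Require Import all_boot all_order all_algebra.
From mathcomp Require Import all_classical all_reals all_analysis.
From mathcomp Require Import measurable_realfun.
Import Order.TTheory GRing.Theory Num.Theory numFieldNormedType.Exports.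

Section PartL.
Local Open Scope ring_scope.
Local Open Scope classical_set_scope.
Variable K : realType.

Lemma my_le_int (D : set K) (f g : K -> \bar K) :
  (forall x, D x -> (0 <= f x)%E) -> (forall x, D x -> (f x <= g x)%E) ->
  (\int[@lebesgue_measure K]_(x in D) f x <= \int[@lebesgue_measure K]_(x in D) g x)%E.
Proof.
move=> f0 fg.
have g0 : forall x, D x -> (0 <= g x)%E by move=> x Dx; exact: le_trans (f0 x Dx) (fg x Dx).
rewrite (@ge0_integralE _ _ _ (@lebesgue_measure K) D f f0) (@ge0_integralE _ _ _ (@lebesgue_measure K) D g g0).
apply: ereal_sup_le => _ [h hf <-]; exists h => //= z.
apply: le_trans (hf z) _; rewrite /patch; case: ifP => // /set_mem Dz.
exact: fg.
Qed.

Definition hh (a b : K) (s : K) : K := a + b * (Num.sqrt s)^-1.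

Lemma hh_cont (a b t : K) : 0 < t -> {for t, continuous (hh a b)}.
Proof.
move=> t0; rewrite /hh.
apply: cvgD; first exact: cvg_cst.
apply: cvgM; first exact: cvg_cst.
apply: cvgV; first by rewrite gt_eqF // sqrtr_gt0.
exact: sqrt_continuous.
Qed.

Lemma partL_gen (a b : K) : 0 <= a -> 0 <= b ->
  (\int[@lebesgue_measure K]_(x in `]0%R, 1%R]) (hh a b x)%:E <= (a + 2 * b)%:E)%E.
Proof.
move=> a0 b0.
have h0 : forall t, 0 <= hh a b t.
  by move=> t; rewrite /hh addr_ge0 // mulr_ge0 // invr_ge0 sqrtr_ge0.
pose F := fun n : nat => `[(n.+1%:R)^-1, 1] : set K.
have FU : \bigcup_n F n = `]0, 1].
  rewrite eqEsubset; split.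
    move=> x [n _]; rewrite /F /= !in_itv /= => /andP[nx x1].
    by rewrite x1 andbT (lt_le_trans _ nx) // invr_gt0 ltr0n.
  move=> x; rewrite /= in_itv /= => /andP[x0 x1].
  exists (Num.truncn x^-1) => //; rewrite /F /= in_itv /= x1 andbT.
  rewrite invf_ple ?posrE ?ltr0n //; apply: ltW; exact: truncnS_gt.
have mh : measurable_fun (`]0%R, +oo[ : set K) (hh a b).
  apply: open_continuous_measurable_fun; first exact: interval_open.
  by move=> t; rewrite inE /= in_itv /= andbT => t0; exact: hh_cont.
have ndF : {homo F : n m / (n <= m)%N >-> (n <= m)%O}.
  move=> n m nm; rewrite /F; apply/subsetPset; apply: subset_itv; rewrite bnd_simp //.
  by rewrite lef_pV2 ?posrE ?ltr0n // ler_nat.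
have mF : forall i, measurable (F i).
  by move=> i; exact: measurable_itv.
have mf : forall i, measurable_fun (F i) (EFin \o hh a b).
  move=> i; apply/measurable_EFinP; apply: measurable_funS mh.
    exact: measurable_itv.
  move=> x; rewrite /F /= !in_itv /= andbT => /andP[nx _].
  by rewrite (lt_le_trans _ nx) // invr_gt0 ltr0n.
have f0 : forall i x, F i x -> (0 <= (EFin \o hh a b) x)%E.
  by move=> i x _; rewrite /= lee_fin.
have Hcvg := @ge0_nondecreasing_set_cvg_integral _ (measurableTypeR K) K F (EFin \o hh a b) (@lebesgue_measure K) ndF mF mf f0.
rewrite -FU -(cvg_lim _ Hcvg) //.
apply: lime_le; first exact: cvgP Hcvg.
pose H := fun s : K => a * s + 2 * b * Num.sqrt s.
have cH : forall x, {for x, continuous H}.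
  move=> x; rewrite /H; apply: cvgD.
    by apply: cvgM; [exact: cvg_cst | exact: cvg_id].
  by apply: cvgM; [exact: cvg_cst | exact: sqrt_continuous].
have dH : forall x : K, 0 < x -> is_derive x 1 H (hh a b x).
  move=> x x0.
  have -> : hh a b x = a *: 1 + (2 * b) *: (2 * Num.sqrt x)^-1.
    rewrite /hh /GRing.scale /= mulr1; congr (_ + _).
    by rewrite invfM mulrACA mulfV ?pnatr_eq0 // mul1r.
  apply: is_deriveD.
  exact: (is_deriveZ (2 * b) (is_derive1_sqrt x0)).
near=> i.
have i1 : (1 <= i)%N by near: i; exact: nbhs_infty_ge.
set u := (i.+1%:R)^-1 : K.
have u0 : 0 < u by rewrite invr_gt0 ltr0n.
have u1 : u < 1 by rewrite invf_lt1 ?ltr0n // ltr1n ltnS.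
rewrite /F (@continuous_FTC2 _ (hh a b) H) //.
- rewrite -EFinB lee_fin /H sqrtr1 !mulr1 lerBlDl lerDr.
  by rewrite addr_ge0 // mulr_ge0 // ?(ltW u0) ?sqrtr_ge0 // mulr_ge0.
- apply: continuous_in_subspaceT => x; rewrite inE /= in_itv /= => /andP[ux _].
  exact: hh_cont (lt_le_trans u0 ux).
- split.
  + move=> x; rewrite /= in_itv /= => /andP[ux _].
    by have [] := dH x (lt_trans u0 ux).
  + exact: cvg_at_right_filter (cH u).
  + exact: cvg_at_left_filter (cH 1).
- move=> x; rewrite /= in_itv /= => /andP[ux _].
  rewrite derive1E; apply: derive_val; exact: dH (lt_trans u0 ux).
Unshelve. all: by end_near.
Qed.
End PartL.

From mathcomp Require Import Rstruct Rstruct_topology.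
From Stdlib Require Reals.
Section Bridge.
Local Open Scope ring_scope.
Local Open Scope classical_set_scope.

Lemma partL_R (a b : Rdefinitions.R) (g : Rdefinitions.R -> Rdefinitions.R) :
  Rdefinitions.Rle (Rdefinitions.IZR BinNums.Z0) a -> Rdefinitions.Rle (Rdefinitions.IZR BinNums.Z0) b ->
  (forall t, Rdefinitions.Rlt (Rdefinitions.IZR BinNums.Z0) t -> Rdefinitions.Rle t (Rdefinitions.IZR (BinNums.Zpos BinNums.xH)) ->
     Rdefinitions.Rle (Rdefinitions.IZR BinNums.Z0) (g t) /\
     Rdefinitions.Rle (g t) (Rdefinitions.Rplus a (Rdefinitions.Rdiv b (R_sqrt.sqrt t)))) ->
  lebesgue_int_0_1_le g (Rdefinitions.Rplus a (Rdefinitions.Rplus b b)).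
Proof.
move=> /RleP a0 /RleP b0 gb; rewrite /lebesgue_int_0_1_le /lebesgue_int_0_1.
have H1 := @partL_gen _ a b a0 b0.
have H2 : (\int[@lebesgue_measure Rdefinitions.R]_(x in `]0%R, 1%R]) (g x)%:E <=
   \int[@lebesgue_measure Rdefinitions.R]_(x in `]0%R, 1%R]) (@hh _ a b x)%:E)%E.
  apply: (@my_le_int Rdefinitions.R) => t; rewrite /= in_itv /= => /andP[/RltP t0 /RleP t1];
    have [/RleP g0 /RleP g1] := gb t t0 t1; rewrite lee_fin //.
  by move: g1; rewrite RplusE RdivE RsqrtE.
rewrite (_ : Rdefinitions.Rplus a (Rdefinitions.Rplus b b) = (a + 2 * b)%R);
  first exact: le_trans H2 H1.
by rewrite !RplusE mulr_natl mulr2n.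
Qed.
End Bridge.

From Stdlib Require Import Reals Lra.
From Coquelicot Require Import Coquelicot.
Open Scope R_scope.
Lemma lift_deriv (X Y S a : R -> R) (th0 : R) :
  (forall th, 0 < S th) ->
  (forall th, X th = S th * cos (a th) /\ Y th = S th * sin (a th)) ->
  continuous a th0 ->
  ex_derive X th0 -> ex_derive Y th0 ->
  is_derive a th0 ((X th0 * Derive Y th0 - Y th0 * Derive X th0) / (X th0 ^ 2 + Y th0 ^ 2)).
Proof.
intros Spos XY ca exX exY.
set a0 := a th0.
assert (Hsc1 : forall u, sin u * sin u + cos u * cos u = 1).
{ intro u. pose proof (sin2_cos2 u) as Hsc. unfold Rsqr in Hsc. exact Hsc. }
set S0 := S th0.
assert (HX0 : X th0 = S0 * cos a0) by apply XY.
assert (HY0 : Y th0 = S0 * sin a0) by apply XY.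
assert (HS0 : 0 < S0) by apply Spos.
assert (HD0 : X th0 ^ 2 + Y th0 ^ 2 = S0 ^ 2).
{ rewrite HX0 HY0. pose proof (sin2_cos2 a0) as Hsc. unfold Rsqr in Hsc. nra. }
set N := fun th => X th0 * Y th - Y th0 * X th.
set D := fun th => X th0 * X th + Y th0 * Y th.
assert (Hloc : locally th0 (fun th => Rabs (a th - a0) < PI / 2)).
{ assert (Hp : 0 < PI / 2) by (pose proof PI_RGT_0; lra).
  apply (ca (ball a0 (mkposreal _ Hp))).
  apply locally_ball. }
apply (is_derive_ext_loc (fun th => a0 + atan (N th / D th))).
{ eapply filter_imp; [| exact Hloc]. intros th Hth.
  set z := a th - a0.
  assert (Ha : a th = a0 + z) by (unfold z; ring).
  destruct (XY th) as [HX HY].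
  assert (HS : 0 < S th) by apply Spos.
  assert (Hz : - (PI / 2) < z < PI / 2) by (cbv beta in Hth; destruct (Rabs_def2 _ _ Hth); unfold z; split; lra).
  assert (Hcz : 0 < cos z) by (apply cos_gt_0; lra).
  assert (HN : N th = S0 * S th * sin z).
  { unfold N. rewrite HX HY HX0 HY0 Ha sin_plus cos_plus.
    transitivity (S0 * S th * sin z * (sin a0 * sin a0 + cos a0 * cos a0)); [ring|].
    rewrite Hsc1; ring. }
  assert (HD : D th = S0 * S th * cos z).
  { unfold D. rewrite HX HY HX0 HY0 Ha sin_plus cos_plus.
    transitivity (S0 * S th * cos z * (sin a0 * sin a0 + cos a0 * cos a0)); [ring|].
    rewrite Hsc1; ring. }
  rewrite HN HD.
  replace (S0 * S th * sin z / (S0 * S th * cos z)) with (tan z).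
  2: { unfold tan. field. split; [lra|]. split; lra. }
  rewrite (atan_tan z Hz). symmetry; exact Ha. }
set dX := Derive X th0.
set dY := Derive Y th0.
assert (HdX : is_derive X th0 dX) by (apply Derive_correct; exact exX).
assert (HdY : is_derive Y th0 dY) by (apply Derive_correct; exact exY).
assert (HdN : is_derive N th0 (X th0 * dY - Y th0 * dX)).
{ unfold N. apply: is_derive_minus.
  - apply: is_derive_scal. exact HdY.
  - apply: is_derive_scal. exact HdX. }
assert (HdD : is_derive D th0 (X th0 * dX + Y th0 * dY)).
{ unfold D. apply: is_derive_plus.
  - apply: is_derive_scal. exact HdX.
  - apply: is_derive_scal. exact HdY. }
assert (HN0 : N th0 = 0) by (unfold N; ring).
assert (HDv : D th0 = S0 ^ 2) by (unfold D; rewrite -HD0; ring).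
assert (HDne : D th0 <> 0) by (rewrite HDv; apply pow_nonzero; lra).
have Hq := is_derive_div N D th0 _ _ HdN HdD HDne.
assert (Hat : is_derive atan (N th0 / D th0) (/ (1 + (N th0 / D th0) ^ 2))).
{ apply is_derive_Reals. apply derivable_pt_lim_atan. }
have Hc := is_derive_comp atan (fun th => N th / D th) th0 _ _ Hat Hq.
have Hp := is_derive_plus (fun _ => a0) (fun th => atan (N th / D th)) th0 _ _ (is_derive_const a0 th0) Hc.
simpl in Hp.
match type of Hp with is_derive _ _ ?L => replace ((X th0 * dY - Y th0 * dX) / (X th0 ^ 2 + Y th0 ^ 2)) with L end.
{ exact Hp. }
unfold plus, scal, zero; simpl. unfold mult; simpl.
rewrite HN0 HDv HD0. field. lra.
Qed.

Ltac side := repeat split; repeat match goal with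
 | |- _ /\ _ => split
 | |- True => exact I
 | H : forall _ : _, ex_derive _ _ |- ex_derive _ _ => apply H
 | |- _ <> 0 => apply Rgt_not_eq; repeat apply Rmult_lt_0_compat; lra
 | |- 0 < _ => nra
 end.

Ltac prep th := match goal with Sp : forall _ : R, 0 < speed _ _ _ _, S2 : forall _ : R, speed _ _ _ _ ^ 2 = _ |- _ =>
  let Hsp := fresh "Hsp" in let Hq := fresh "Hq" in
  pose proof (Sp th) as Hsp; pose proof (S2 th) as Hq; unfold speed in Hsp, Hq; simpl in Hsp, Hq end.

Lemma inner_bound (A : R) (x y alpha : R -> R -> R) (t C1 C2 C3 C4 : R) :
  0 <= A -> 0 < t ->
  (forall th, ex_derive (fun s => d_th x t s) th) ->
  (forall th, ex_derive (fun s => d_th y t s) th) ->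
  (forall th, ex_derive (fun s => d_th (d_th x) t s) th) ->
  (forall th, ex_derive (fun s => d_th (d_th y) t s) th) ->
  (forall th, ex_derive (fun s => d_t x t s) th) ->
  (forall th, ex_derive (fun s => d_t y t s) th) ->
  (forall th, speed x y t th <> 0) ->
  (forall th, continuous (fun s => alpha t s) th) ->
  (forall th, d_th x t th = speed x y t th * cos (alpha t th) /\
              d_th y t th = speed x y t th * sin (alpha t th)) ->
  curve_length x y t <= C1 ->
  (forall th, sqrt (d_t x t th ^ 2 + d_t y t th ^ 2) <= C2) ->
  RInt (fun th => Rabs (d_th alpha t th)) 0 (2 * PI) <= C3 ->
  (forall th, Rabs (curvature x y t th) <= C4 / t) ->
  inner_integral A x y t <= C2 ^ 2 * C1 + C2 ^ 2 * (A * C3 * C4) / t.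
Proof.
intros HA Ht dX dY dX2 dY2 dT1 dT2 Hs0 ca Hlift HC1 HC2 HC3 HC4.
assert (Spos : forall th, 0 < speed x y t th).
{ intro th. pose proof (sqrt_pos (d_th x t th ^ 2 + d_th y t th ^ 2)) as H.
  specialize (Hs0 th). unfold speed in *. lra. }
assert (Hs2 : forall th, speed x y t th ^ 2 = d_th x t th ^ 2 + d_th y t th ^ 2).
{ intro th. unfold speed. rewrite -Rsqr_pow2. apply Rsqr_sqrt. nra. }
assert (Hsd : forall th, ex_derive (fun s => speed x y t s) th).
{ intro th. unfold speed. auto_derive.
  split; [apply dX|split; [apply dY|split; [|exact I]]].
  pose proof (Spos th) as H1; pose proof (Hs2 th) as H2; simpl in H2; nra. }
assert (Hal : forall th, d_th alpha t th = curvature x y t th * speed x y t th).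
{ intro th. unfold d_th at 1. apply is_derive_unique.
  have H := lift_deriv (d_th x t) (d_th y t) (speed x y t) (alpha t) th Spos Hlift (ca th) (dX th) (dY th).
  match type of H with is_derive _ _ ?L =>
    replace (curvature x y t th * speed x y t th) with L; [exact H|] end.
  unfold curvature. change (Derive (d_th y t) th) with (d_th (d_th y) t th).
  change (Derive (d_th x t) th) with (d_th (d_th x) t th).
  rewrite -(Hs2 th). pose proof (Spos th). field. lra. }
assert (Hkd : forall th, ex_derive (fun s => curvature x y t s * speed x y t s) th).
{ intro th. prep th. unfold curvature, speed. auto_derive. side. }
set I := fun th => (1 + A * curvature x y t th ^ 2) * normal_velocity x y t th ^ 2 * speed x y t th.
assert (Hid : forall th, ex_derive I th).
{ intro th. prep th. unfold I, curvature, normal_velocity, speed. auto_derive. side. }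
assert (HC2p : forall th, d_t x t th ^ 2 + d_t y t th ^ 2 <= C2 ^ 2).
{ intro th. specialize (HC2 th).
  pose proof (sqrt_pos (d_t x t th ^ 2 + d_t y t th ^ 2)).
  rewrite -(sqrt_sqrt (d_t x t th ^ 2 + d_t y t th ^ 2)); [nra|nra]. }
assert (Hnv : forall th, normal_velocity x y t th ^ 2 <= C2 ^ 2).
{ intro th. apply Rle_trans with (d_t x t th ^ 2 + d_t y t th ^ 2); [|apply HC2p].
  pose proof (Spos th) as Hp. pose proof (Hs2 th) as Hq.
  unfold normal_velocity.
  set s := speed x y t th in Hp Hq *.
  set T1 := d_t x t th. set T2 := d_t y t th. set X1 := d_th x t th. set Y1 := d_th y t th.
  replace (((- T1 * Y1 + T2 * X1) / s) ^ 2) with ((- T1 * Y1 + T2 * X1) ^ 2 / s ^ 2) by (field; lra).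
  apply Rmult_le_reg_r with (s ^ 2); [nra|].
  replace ((- T1 * Y1 + T2 * X1) ^ 2 / s ^ 2 * s ^ 2) with ((- T1 * Y1 + T2 * X1) ^ 2) by (field; lra).
  rewrite Hq.
  assert (E : (T1 ^ 2 + T2 ^ 2) * (X1 ^ 2 + Y1 ^ 2) - (- T1 * Y1 + T2 * X1) ^ 2 = (T1 * X1 + T2 * Y1) ^ 2) by ring.
  pose proof (pow2_ge_0 (T1 * X1 + T2 * Y1)). unfold X1, Y1 in *. lra. }
assert (Hpt : forall th, I th <= C2 ^ 2 * speed x y t th +
   (C2 ^ 2 * A * (C4 / t)) * Rabs (curvature x y t th * speed x y t th)).
{ intro th. unfold I. pose proof (Spos th) as Hp. pose proof (Hnv th) as Hn.
  pose proof (HC4 th) as Hk.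
  set s := speed x y t th in Hp Hn Hk *. set k := curvature x y t th in Hk *.
  set n := normal_velocity x y t th in Hn *.
  rewrite Rabs_mult (Rabs_pos_eq s); [|lra].
  pose proof (Rabs_pos k) as Hk0.
  assert (Hk2 : k ^ 2 = Rabs k * Rabs k) by (rewrite -Rabs_mult; rewrite Rabs_pos_eq; [ring|nra]).
  assert (Hn0 : 0 <= n ^ 2) by nra.
  assert (H1 : n ^ 2 * s <= C2 ^ 2 * s) by nra.
  assert (H2 : A * k ^ 2 * s * n ^ 2 <= A * k ^ 2 * s * C2 ^ 2).
  { apply Rmult_le_compat_l; [|exact Hn]. apply Rmult_le_pos; [apply Rmult_le_pos; [lra|apply pow2_ge_0]|lra]. }
  assert (H3 : A * C2 ^ 2 * s * Rabs k * Rabs k <= A * C2 ^ 2 * s * Rabs k * (C4 / t)).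
  { apply Rmult_le_compat_l; [|exact Hk]. assert (0 <= C2 ^ 2) by nra. 
    apply Rmult_le_pos; [apply Rmult_le_pos; [apply Rmult_le_pos; [lra|lra]|lra]|exact Hk0]. }
  replace (A * k ^ 2 * s * C2 ^ 2) with (A * C2 ^ 2 * s * Rabs k * Rabs k) in H2 by (rewrite Hk2; ring).
  replace ((1 + A * k ^ 2) * n ^ 2 * s) with (n ^ 2 * s + A * k ^ 2 * s * n ^ 2) by ring.
  lra. }
assert (HP : 0 <= 2 * PI) by (pose proof PI_RGT_0; lra).
set K := C2 ^ 2 * A * (C4 / t).
assert (HC4t : 0 <= C4 / t) by (pose proof (HC4 0); pose proof (Rabs_pos (curvature x y t 0)); lra).
assert (HK : 0 <= K) by (unfold K; apply Rmult_le_pos; [apply Rmult_le_pos; [nra|lra]|lra]).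
assert (exI : ex_RInt I 0 (2 * PI)).
{ apply (@ex_RInt_continuous R_CompleteNormedModule); intros z _; have Hc := ex_derive_continuous I z (Hid z); exact Hc. }
assert (exS : ex_RInt (fun th => speed x y t th) 0 (2 * PI)).
{ apply (@ex_RInt_continuous R_CompleteNormedModule); intros z _; have Hc := ex_derive_continuous (fun th => speed x y t th) z (Hsd z); exact Hc. }
assert (exK : ex_RInt (fun th => Rabs (curvature x y t th * speed x y t th)) 0 (2 * PI)).
{ apply (@ex_RInt_continuous R_CompleteNormedModule); intros z _; have Hc := ex_derive_continuous (fun th => curvature x y t th * speed x y t th) z (Hkd z);
  exact (continuous_Rabs_comp _ z Hc). }
set g := fun th => plus (scal (C2 ^ 2) (speed x y t th)) (scal K (Rabs (curvature x y t th * speed x y t th))).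
assert (exG : ex_RInt g 0 (2 * PI)).
{ apply (@ex_RInt_plus R_NormedModule); apply (@ex_RInt_scal R_NormedModule); [exact exS|exact exK]. }
assert (Hle : RInt I 0 (2 * PI) <= RInt g 0 (2 * PI)).
{ apply RInt_le; [exact HP|exact exI|exact exG|]. intros z _. apply Hpt. }
assert (Hg : RInt g 0 (2 * PI) = C2 ^ 2 * curve_length x y t +
   K * RInt (fun th => Rabs (d_th alpha t th)) 0 (2 * PI)).
{ unfold g.
  rewrite (@RInt_plus R_CompleteNormedModule (fun th => scal (C2 ^ 2) (speed x y t th))
     (fun th => scal K (Rabs (curvature x y t th * speed x y t th)))).
  2: { apply (@ex_RInt_scal R_NormedModule); exact exS. }
  2: { apply (@ex_RInt_scal R_NormedModule); exact exK. }
  rewrite (@RInt_scal R_CompleteNormedModule (fun th => speed x y t th)).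
  2: exact exS.
  rewrite (@RInt_scal R_CompleteNormedModule (fun th => Rabs (curvature x y t th * speed x y t th))).
  2: exact exK.
  rewrite (RInt_ext (fun th => Rabs (d_th alpha t th)) (fun th => Rabs (curvature x y t th * speed x y t th))).
  2: { intros z _. rewrite Hal. reflexivity. }
  unfold curve_length. reflexivity. }
unfold inner_integral. fold I.
assert (H1 : C2 ^ 2 * curve_length x y t <= C2 ^ 2 * C1) by (apply Rmult_le_compat_l; [nra|exact HC1]).
assert (H2 : K * RInt (fun th => Rabs (d_th alpha t th)) 0 (2 * PI) <= K * C3) by (apply Rmult_le_compat_l; [exact HK|exact HC3]).
assert (H3 : K * C3 = C2 ^ 2 * (A * C3 * C4) / t) by (unfold K; field; lra).
lra.
Qed.

Lemma alpha_cont (alpha : R -> R -> R) (t th0 : R) : 0 < t <= 1 ->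
  filterlim (fun p : R * R => alpha (fst p) (snd p))
       (within (fun p : R * R => 0 < fst p <= 1) (locally (t, th0)))
       (locally (alpha t th0)) ->
  continuous (fun s => alpha t s) th0.
Proof.
intros Ht H.
unfold continuous.
apply (filterlim_comp _ _ _ (fun s => (t, s)) (fun p : R * R => alpha (fst p) (snd p))
  (locally th0) (within (fun p : R * R => 0 < fst p <= 1) (locally (t, th0)))); [|exact H].
intros Q HQ. unfold within in HQ. destruct HQ as [eps Heps].
exists eps. intros s Hs. apply Heps; [|exact Ht].
split; [apply ball_center|exact Hs].
Qed.

Lemma sqrt_add_le (u v : R) : sqrt (u + v) <= sqrt u + sqrt v.
Proof.
destruct (Rle_or_lt 0 u) as [Hu|Hu]; destruct (Rle_or_lt 0 v) as [Hv|Hv].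
- rewrite -(sqrt_pow2 (sqrt u + sqrt v)); [|pose proof (sqrt_pos u); pose proof (sqrt_pos v); lra].
  apply sqrt_le_1_alt.
  pose proof (sqrt_sqrt u Hu); pose proof (sqrt_sqrt v Hv).
  pose proof (sqrt_pos u); pose proof (sqrt_pos v). nra.
- rewrite (sqrt_neg_0 v); [|lra]. rewrite Rplus_0_r. apply sqrt_le_1_alt. lra.
- rewrite (sqrt_neg_0 u); [|lra]. rewrite Rplus_0_l. apply sqrt_le_1_alt. lra.
- rewrite (sqrt_neg_0 u); [|lra]. rewrite (sqrt_neg_0 v); [|lra]. rewrite (sqrt_neg_0 (u + v)); lra.
Qed.

Theorem mainTheorem12
  (A : R) (x y alpha : R -> R -> R) (eps C1 C2 C3 C4 : R) :
  0 <= A ->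
  0 < eps ->
  smooth_on (fun t _ => 0 < t < 1 + eps) x ->
  smooth_on (fun t _ => 0 < t < 1 + eps) y ->
  (forall t th, 0 < t < 1 + eps ->
     x t (th + 2 * PI) = x t th /\ y t (th + 2 * PI) = y t th) ->
  (forall t th, 0 < t <= 1 -> speed x y t th <> 0) ->
  (forall t th, 0 < t <= 1 ->
     filterlim (fun p : R * R => alpha (fst p) (snd p))
       (within (fun p : R * R => 0 < fst p <= 1) (locally (t, th)))
       (locally (alpha t th))) ->
  (forall t th, 0 < t <= 1 ->
     d_th x t th = speed x y t th * cos (alpha t th) /\
     d_th y t th = speed x y t th * sin (alpha t th)) ->
  (forall t, 0 < t <= 1 -> curve_length x y t <= C1) ->
  (forall t th, 0 < t <= 1 -> sqrt (d_t x t th ^ 2 + d_t y t th ^ 2) <= C2) ->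
  (forall t, 0 < t <= 1 -> RInt (fun th => Rabs (d_th alpha t th)) 0 (2 * PI) <= C3) ->
  (forall t th, 0 < t <= 1 -> Rabs (curvature x y t th) <= C4 / t) ->
  lebesgue_int_0_1_le (fun t => sqrt (inner_integral A x y t))
    (C2 * (sqrt C1 + 2 * sqrt (A * C3 * C4))).
Proof.
intros HA Heps Hsx Hsy Hper Himm Halpha Hlift HC1 HC2 HC3 HC4.
assert (HC2p : 0 <= C2).
{ pose proof (HC2 1 0 ltac:(lra)) as H. pose proof (sqrt_pos (d_t x 1 0 ^ 2 + d_t y 1 0 ^ 2)). lra. }
set P := A * C3 * C4.
replace (C2 * (sqrt C1 + 2 * sqrt P)) with (Rplus (C2 * sqrt C1) (Rplus (C2 * sqrt P) (C2 * sqrt P))) by ring.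
apply partL_R.
{ apply Rmult_le_pos; [exact HC2p|apply sqrt_pos]. }
{ apply Rmult_le_pos; [exact HC2p|apply sqrt_pos]. }
intros t Ht0 Ht1. split; [apply sqrt_pos|].
assert (Ht : 0 < t <= 1) by lra.
assert (U : forall th : R, 0 < t < 1 + eps) by (intros; lra).
have Hin := inner_bound A x y alpha t C1 C2 C3 C4 HA Ht0
  (fun th => proj1 (proj2 (Hsx (false :: nil) t th (U th))))
  (fun th => proj1 (proj2 (Hsy (false :: nil) t th (U th))))
  (fun th => proj1 (proj2 (Hsx (false :: false :: nil) t th (U th))))
  (fun th => proj1 (proj2 (Hsy (false :: false :: nil) t th (U th))))
  (fun th => proj1 (proj2 (Hsx (true :: nil) t th (U th))))
  (fun th => proj1 (proj2 (Hsy (true :: nil) t th (U th))))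
  (fun th => Himm t th Ht)
  (fun th => alpha_cont alpha t th Ht (Halpha t th Ht))
  (fun th => Hlift t th Ht)
  (HC1 t Ht) (fun th => HC2 t th Ht) (HC3 t Ht) (fun th => HC4 t th Ht).
apply Rle_trans with (sqrt (C2 ^ 2 * C1 + C2 ^ 2 * (A * C3 * C4) / t)).
{ apply sqrt_le_1_alt. exact Hin. }
apply Rle_trans with (sqrt (C2 ^ 2 * C1) + sqrt (C2 ^ 2 * (A * C3 * C4) / t)); [apply sqrt_add_le|].
assert (E1 : sqrt (C2 ^ 2 * C1) = C2 * sqrt C1).
{ rewrite sqrt_mult_alt; [|nra]. rewrite sqrt_pow2; [reflexivity|exact HC2p]. }
assert (E2 : sqrt (C2 ^ 2 * (A * C3 * C4) / t) = C2 * sqrt P / sqrt t).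
{ replace (C2 ^ 2 * (A * C3 * C4) / t) with ((C2 ^ 2 / t) * P) by (unfold P; field; lra).
  rewrite sqrt_mult_alt.
  2: { apply Rmult_le_pos; [nra|]. apply Rlt_le, Rinv_0_lt_compat; lra. }
  rewrite sqrt_div_alt; [|exact Ht0]. rewrite sqrt_pow2; [|exact HC2p].
  field. apply Rgt_not_eq, sqrt_lt_R0; lra. }
rewrite E1 E2. unfold Rdiv. lra.
Qed.
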